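(* Let $G$ be the Heawood graph. Then $M(G)=Z(G)=6$.
   Context: The Heawood graph is the bipartite incidence graph of the Fano plane: its $14$ vertices are the $7$ points $1,\dots,7$ and the $7$ lines $\{1,2,4\},\{2,3,5\},\{3,4,6\},\{4,5,7\},\{5,6,1\},\{6,7,2\},\{7,1,3\}$, and a point is adjacent to a line if and only if it lies on it; it is $3$-regular. For a graph $G$ on vertices $w_1,\dots,w_N$, $S(G)$ is the set of real symmetric $N\times N$ matrices $A$ with $a_{st}\neq 0$ for $s\ne t$ if and only if $w_s,w_t$ are adjacent (diagonal arbitrary); $M(G)$ is the maximum nullity of a matrix in $S(G)$. Zero forcing: color each vertex black or white; if a black vertex has exactly one white neighbor, that neighbor is recolored black. A set $Z$ is a zero forcing set if starting with exactly $Z$ black and applying this rule repeatedly makes all vertices black; $Z(G)$ is the minimum size of a zero forcing set. *)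

(* Defs.v *)
From HB Require Import structures.
From mathcomp Require Import all_boot all_order all_algebra.
From mathcomp Require Import reals.
Set Implicit Arguments. Unset Strict Implicit. Unset Printing Implicit Defensive.
Import Order.TTheory GRing.Theory Num.Theory.

(* ---------- The Heawood graph on vertex set 'I_14 ----------
   Vertices 0..6 are the Fano points 1..7 (vertex i is point i+1),
   vertices 7..13 are the seven lines, in the order listed below. *)
Definition fano_lines : seq (seq nat) :=
  [:: [:: 1; 2; 4]; [:: 2; 3; 5]; [:: 3; 4; 6]; [:: 4; 5; 7];
      [:: 5; 6; 1]; [:: 6; 7; 2]; [:: 7; 1; 3]].

Definition fano_incid (p l : nat) : bool := p.+1 \in nth [::] fano_lines l.

Definition heawood_adj : rel 'I_14 := fun i j =>
  ((i < 7) && (7 <= j) && fano_incid i (j - 7))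
  || ((j < 7) && (7 <= i) && fano_incid j (i - 7)).

Section MR.
Variable R : realType.
Local Open Scope ring_scope.

Definition in_SG (n : nat) (e : rel 'I_n) (A : 'M[R]_n) : Prop :=
  A^T = A /\ (forall i j : 'I_n, i != j -> (A i j != 0) = e i j).

Definition nullity (n : nat) (A : 'M[R]_n) : nat := (n - \rank A)%N.

Definition is_max_nullity (n : nat) (e : rel 'I_n) (k : nat) : Prop :=
  (exists A : 'M[R]_n, in_SG e A /\ nullity A = k) /\
  (forall A : 'M[R]_n, in_SG e A -> (nullity A <= k)%N).
End MR.

Section ZF.
Variable T : finType.
Variable e : rel T.

Definition force_step (B : {set T}) : {set T} :=
  B :|: [set w | [exists v, [&& v \in B, e v w, w \notin B &
                    [forall u, (e v u && (u \notin B)) ==> (u == w)]]]].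

Definition zf_closure (Z : {set T}) : {set T} := iter #|T| force_step Z.

Definition zero_forcing_set (Z : {set T}) : bool := zf_closure Z == setT.

Definition zero_forcing_number : nat :=
  \big[minn/#|T|]_(Z : {set T} | zero_forcing_set Z) #|Z|.
End ZF.

(* Main.v *)
Require Import Defs.
From HB Require Import structures.
From mathcomp Require Import all_boot all_order all_algebra.
From mathcomp Require Import reals.
Set Implicit Arguments. Unset Strict Implicit. Unset Printing Implicit Defensive.
Import Order.TTheory GRing.Theory Num.Theory.

Definition adjn (i j : nat) : bool :=
  ((i < 7) && (7 <= j) && fano_incid i (j - 7))
  || ((j < 7) && (7 <= i) && fano_incid j (i - 7)).

Lemma adjnE (i j : 'I_14) : heawood_adj i j = adjn i j.
Proof. by []. Qed.

Lemma heawood_sym (i j : 'I_14) : heawood_adj i j = heawood_adj j i.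
Proof. by rewrite /heawood_adj orbC. Qed.

Definition to_set (s : seq nat) : {set 'I_14} := [set x : 'I_14 | val x \in s].

Definition cstep (s : seq nat) : seq nat :=
  s ++ [seq w <- iota 0 14 | has (fun v => [&& v \in s, adjn v w, w \notin s &
        all (fun u => (adjn v u && (u \notin s)) ==> (u == w)) (iota 0 14)]) (iota 0 14)].

Lemma step_ok s : force_step heawood_adj (to_set s) = to_set (cstep s).
Proof.
apply/setP => w; rewrite !inE mem_cat mem_filter mem_iota add0n leq0n ltn_ord andbT.
rewrite andbT; congr orb; apply/existsP/hasP.
- case=> v /and4P [Hv Hvw Hw Hall]; exists (val v); first by rewrite mem_iota ltn_ord.
  rewrite inE in Hv Hw; apply/and4P; split => //.
  apply/allP => u; rewrite mem_iota => /andP[_ Hu].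
  by have := forallP Hall (Ordinal Hu); rewrite inE.
- case=> v; rewrite mem_iota => /andP[_ Hv14] /and4P[Hv Hvw Hw Hall].
  exists (Ordinal Hv14); rewrite !inE /=; apply/and4P; split => //.
  apply/forallP => u; rewrite inE.
  by have := allP Hall (val u); rewrite mem_iota ltn_ord; apply.
Qed.

Lemma iter_ok n s : iter n (force_step heawood_adj) (to_set s) = to_set (iter n cstep s).
Proof. by elim: n => //= n IH; rewrite IH step_ok. Qed.

Definition s0 : seq nat := [:: 0; 1; 2; 7; 8; 9].

Lemma s0_all : all (fun x => x \in iter 14 cstep s0) (iota 0 14).
Proof. by vm_compute. Qed.

Lemma Z0_zf : zero_forcing_set heawood_adj (to_set s0).
Proof.
rewrite /zero_forcing_set /zf_closure card_ord iter_ok.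
apply/eqP/setP => x; rewrite in_setT in_set.
by apply: (allP s0_all); rewrite mem_iota add0n ltn_ord.
Qed.

Lemma Z0_card : #|to_set s0| <= 6.
Proof.
apply: (@leq_trans #|[seq (inord x : 'I_14) | x <- s0]|).
  apply: subset_leq_card; apply/subsetP => x; rewrite inE => Hx.
  by rewrite -(inord_val x); apply: map_f.
by apply: leq_trans (card_size _) _; rewrite size_map.
Qed.

Section Bound.
Variable R : realType.
Local Open Scope ring_scope.

Lemma ker_zero (A : 'M[R]_14) (Z : {set 'I_14}) (u : 'rV[R]_14) :
  in_SG heawood_adj A -> zero_forcing_set heawood_adj Z ->
  u *m A = 0 -> (forall j, j \in Z -> u 0 j = 0) -> u = 0.
Proof.
move=> [AT Aoff] /eqP HZ uA uZ.
suff H : forall n j, j \in iter n (force_step heawood_adj) Z -> u 0 j = 0.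
  apply/matrixP => i j; rewrite ord1 mxE; apply: (H #|'I_14|).
  by rewrite -/(zf_closure _ _) HZ in_setT.
elim=> [|n IH] j //=; first exact: uZ.
rewrite in_setU => /orP[/IH //|]; rewrite inE => /existsP[v /and4P[Hv Hvj Hj /forallP Hall]].
have /matrixP/(_ 0 v) := uA; rewrite !mxE (bigD1 j) //= big1 ?addr0.
  move/eqP; rewrite mulf_eq0 => /orP[/eqP //|] /negPn.
  rewrite Aoff; first by rewrite heawood_sym Hvj.
  by apply: contraNneq Hj => ->.
move=> i Hij; case Hi: (i \in iter n (force_step heawood_adj) Z).
  by rewrite IH // mul0r.
have Hiv : i != v by apply: contraFneq Hi => ->.
have : A i v == 0.
  rewrite -[_ == 0]negbK Aoff // heawood_sym.
  apply/negP => Hvi; have := Hall i; rewrite Hvi Hi /= => /eqP Eij.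
  by rewrite Eij eqxx in Hij.
by move/eqP ->; rewrite mulr0.
Qed.

Lemma zf_bound (A : 'M[R]_14) (Z : {set 'I_14}) :
  in_SG heawood_adj A -> zero_forcing_set heawood_adj Z -> (nullity A <= #|Z|)%N.
Proof.
move=> HA HZ; rewrite /nullity -mxrank_ker.
pose P : 'M[R]_(14, #|Z|) := \matrix_(i, k) (i == enum_val k)%:R.
rewrite -(mxrank_mul_ker (kermx A) P).
have -> : \rank (kermx A :&: kermx P)%MS = 0%N.
  apply/eqP; rewrite mxrank_eq0; apply/rowV0P => v; rewrite sub_capmx.
  case/andP => /sub_kermxP vA /sub_kermxP vP.
  apply: (ker_zero HA HZ vA) => j Hj.
  have /matrixP/(_ 0 (enum_rank_in Hj j)) := vP.
  rewrite !mxE (bigD1 j) //= big1 ?addr0.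
    by rewrite mxE enum_rankK_in // eqxx mulr1.
  by move=> i Hij; rewrite mxE enum_rankK_in // (negbTE Hij) mulr0.
by rewrite addn0 rank_leq_col.
Qed.
End Bound.

Local Open Scope ring_scope.
Definition az (i j : nat) : int :=
  if i == j then (if (i < 7)%N then 1 else 2) else (adjn i j : nat)%:Z.
Definition xz (i k : nat) : int :=
  if (i < 7)%N then ((i == k) : nat)%:Z else if (k < 7)%N then (adjn k i : nat)%:Z else 1.
Definition yz (k j : nat) : int :=
  if (k < 7)%N then (if (j < 7)%N then ((k == j) : nat)%:Z else (adjn k j : nat)%:Z)
  else (if (j < 7)%N then 0 else -1).
Lemma fact_check : all (fun i => all (fun j => \sum_(k <- iota 0 8) xz i k * yz k j == az i j) (iota 0 14)) (iota 0 14).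
Proof. rewrite unlock. vm_compute. reflexivity. Qed.

Section Witness.
Variable R : realType.

Definition A0 : 'M[R]_14 := \matrix_(i, j) (az i j)%:~R.
Definition X0 : 'M[R]_(14, 8) := \matrix_(i, k) (xz i k)%:~R.
Definition Y0 : 'M[R]_(8, 14) := \matrix_(k, j) (yz k j)%:~R.

Lemma A0_fact : A0 = X0 *m Y0.
Proof.
apply/matrixP => i j; rewrite !mxE.
under eq_bigr do rewrite !mxE -intrM.
rewrite -rmorph_sum; congr (_%:~R).
rewrite -(big_mkord xpredT (fun k => xz i k * yz k j)).
have := allP fact_check i; rewrite mem_iota add0n ltn_ord => /(_ isT).
by move/allP/(_ j); rewrite mem_iota add0n ltn_ord => /(_ isT) /eqP.
Qed.

Lemma A0_SG : in_SG heawood_adj A0.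
Proof.
split.
  apply/matrixP => i j; rewrite !mxE /az eq_sym.
  case: eqP => [->|] //; by rewrite /adjn orbC.
move=> i j Hij; have Hn : (val i == val j) = false by apply/negbTE.
rewrite mxE /az Hn intr_eq0 adjnE.
by case: (adjn i j).
Qed.

Lemma A0_null : (6 <= nullity A0)%N.
Proof.
rewrite /nullity A0_fact.
have := mxrankM_maxl X0 Y0; have := rank_leq_col X0.
move=> h1 h2; have h : (\rank (X0 *m Y0) <= 8)%N by apply: leq_trans h2 h1.
by rewrite leq_subRL ?(leq_trans h) // addnC -leq_subRL.
Qed.
End Witness.

Lemma bigmin_le_mem (T : eqType) (s : seq T) (P : pred T) (F : T -> nat) x0 idx :
  x0 \in s -> P x0 -> (\big[minn/idx]_(x <- s | P x) F x <= F x0)%N.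
Proof.
elim: s => // a s IH; rewrite inE big_cons => /orP[/eqP<- Px|xs Px].
  by rewrite Px geq_minl.
case: (P a); last exact: IH.
by apply: leq_trans (geq_minr _ _) _; exact: IH.
Qed.

Theorem mainTheorem8 (R : realType) :
  is_max_nullity R heawood_adj 6 /\ zero_forcing_number heawood_adj = 6%N.
Proof.
split; first split.
- exists (A0 R); split; first exact: A0_SG.
  apply/eqP; rewrite eqn_leq; apply/andP; split; last exact: A0_null.
  exact: leq_trans (zf_bound (A0_SG R) Z0_zf) Z0_card.
- by move=> A HA; exact: leq_trans (zf_bound HA Z0_zf) Z0_card.
- apply/eqP; rewrite eqn_leq; apply/andP; split.
    apply: leq_trans Z0_card; apply: bigmin_le_mem; [exact: mem_index_enum | exact: Z0_zf].
  rewrite /zero_forcing_number; elim/big_ind: _; first by rewrite card_ord.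
    by move=> x y hx hy; rewrite leq_min hx hy.
  by move=> Z HZ; apply: leq_trans (A0_null R) (zf_bound (A0_SG R) HZ).
Qed.
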